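(* Let $W$ be a finite connected CW-complex, $Q$ the Hilbert cube, and let $\tilde\varphi: S^d\times W\times Q\to S^d\times W\times Q$, $\tilde\varphi(s,w)=(\varphi(s),h_s(w))$, be a minimal homeomorphism, where $h:S^d\to\mathrm{Homeo}(W\times Q)$ is continuous. Then the homeomorphism $\tilde\zeta: Z\times W\times Q\to Z\times W\times Q$, $\tilde\zeta(z,w)=(\zeta(z),h_{q(z)}(w))$, is minimal.
   Context: Fix an odd integer $d\ge3$ and a minimal diffeomorphism $\varphi:S^d\to S^d$. $(Z,\zeta)$ is the point-like minimal system of Deeley–Putnam–Strung associated to $\varphi$: there is a $\varphi$-invariant subset $L_\infty\subset S^d$ (the image of an injective immersion of $\mathbb{R}$); $Z$ is a compact metric space obtained by completing $S^d\setminus L_\infty$ with respect to a suitable metric, so that $S^d\setminus L_\infty$ is a dense subset of $Z$; $\zeta$ is the minimal homeomorphism of $Z$ extending $\varphi|_{S^d\setminus L_\infty}$; $Z$ has the Čech cohomology and $K$-theory of a point; and $q:Z\to S^d$ is an almost one-to-one factor map ($q\circ\zeta=\varphi\circ q$) which is the identity, in particular injective, on $S^d\setminus L_\infty$. A homeomorphism is minimal if it has no proper nonempty closed invariant subsets. *)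

(* Defs.v *)
From HB Require Import structures.
From mathcomp Require Import all_boot all_order all_algebra.
From mathcomp Require Import all_classical all_reals all_analysis.
Set Implicit Arguments. Unset Strict Implicit. Unset Printing Implicit Defensive.
Import Order.TTheory GRing.Theory Num.Theory.
Import numFieldNormedType.Exports.
Local Open Scope classical_set_scope.
Local Open Scope ring_scope.

Fixpoint iderive (R : realType) (V W : normedModType R)
    (vs : seq V) (f : V -> W) : V -> W :=
  match vs with
  | [::] => f
  | v :: vs' => fun x => derive (iderive vs' f) x v
  end.

Definition smooth (R : realType) (V W : normedModType R) (f : V -> W) :=
  forall vs : seq V,
    continuous (iderive vs f) /\ (forall (v x : V), derivable (iderive vs f) x v).

Definition sphere (R : realType) (d : nat) : set 'rV[R]_(d.+1) :=
  [set x | \sum_(i < d.+1) (x ord0 i) ^+ 2 = 1].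
Arguments sphere : clear implicits.

Definition closed_in (T : topologicalType) (A C : set T) :=
  exists D : set T, closed D /\ C = A `&` D.

Definition minimal_on (T : topologicalType) (A : set T) (f : T -> T) :=
  forall C : set T, C `<=` A -> closed_in A C -> C !=set0 -> f @` C = C ->
    C = A.

Definition homeo_on (T : topologicalType) (A : set T) (f g : T -> T) :=
  [/\ f @` A = A, g @` A = A, {in A, cancel f g} & {in A, cancel g f}] /\
  {within A, continuous f} /\ {within A, continuous g}.

Definition sphere_diffeo (R : realType) (d : nat)
    (f : 'rV[R]_(d.+1) -> 'rV[R]_(d.+1)) :=
  exists g : 'rV[R]_(d.+1) -> 'rV[R]_(d.+1),
    homeo_on (sphere R d) f g /\
    exists F G : 'rV[R]_(d.+1) -> 'rV[R]_(d.+1),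
      smooth F /\ smooth G /\
      {in sphere R d, F =1 f} /\ {in sphere R d, G =1 g}.

Definition injective_immersed_line (R : realType) (d : nat)
    (L : set 'rV[R]_(d.+1)) :=
  exists gamma : R^o -> 'rV[R]_(d.+1),
    smooth gamma /\ injective gamma /\ (forall t : R^o, derive gamma t 1 != 0) /\
    range gamma = L.

Definition hilbert_cube (R : realType) : set {ptws nat -> R} :=
  [set x | forall n, 0 <= x n <= 1].
Arguments hilbert_cube : clear implicits.

(* h : S -> Homeo(X) continuous (compact-open topology, X compact Hausdorff):
   each h s is a homeomorphism of X with inverse hi s, and both
   (s,x) |-> h s x and (s,x) |-> hi s x are jointly continuous on S x X. *)
Definition cont_homeo_family (S X : topologicalType) (A : set S) (B : set X)
    (h hi : S -> X -> X) :=
  (forall s, A s -> homeo_on B (h s) (hi s)) /\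
  {within A `*` B, continuous (fun p : S * X => h p.1 p.2)} /\
  {within A `*` B, continuous (fun p : S * X => hi p.1 p.2)}.

(* Main.v *)
Require Import Defs.
From HB Require Import structures.
From mathcomp Require Import all_boot all_order all_algebra.
From mathcomp Require Import all_classical all_reals all_analysis.
Import Order.TTheory GRing.Theory Num.Theory.
Import numFieldNormedType.Exports.
Local Open Scope classical_set_scope.
Local Open Scope ring_scope.


Lemma hausdorff_pair (U V : topologicalType) :
  hausdorff_space U -> hausdorff_space V -> hausdorff_space (U * V)%type.
Proof.
move=> hU hV [p1 p2] [q1 q2]; rewrite cluster_cvgE => -[G PG [Gq pG]].
congr pair.
- apply: hU; rewrite cluster_cvgE; exists (fst @ G); first exact: fmap_proper_filter.
  split; first exact: (cvg_trans (cvg_app fst Gq) cvg_fst).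
  move: (cvg_app fst pG) => /cvg_trans; apply; exact: cvg_fst.
- apply: hV; rewrite cluster_cvgE; exists (snd @ G); first exact: fmap_proper_filter.
  split; first exact: (cvg_trans (cvg_app snd Gq) cvg_snd).
  move: (cvg_app snd pG) => /cvg_trans; apply; exact: cvg_snd.
Qed.

Lemma hilbert_cube_compact (R : realType) : compact (hilbert_cube R).
Proof.
have -> : hilbert_cube R = [set f : {ptws nat -> R} | forall i, (`[0, 1]%classic : set R) (f i)].
  apply/seteqP; split => f /= Hf i; have := Hf i => /=; by rewrite in_itv.
apply: (@tychonoff nat (fun _ => R) (fun _ => `[0, 1]%classic)) => i; exact: segment_compact.
Qed.

Lemma pc (Z U X : topologicalType) (q : Z -> U) : continuous q ->
  continuous (fun p : Z * X => (q p.1, p.2)).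
Proof.
move=> cq [z x].
apply: (@cvg_pair _ _ _ (nbhs (z, x)) (nbhs (q z)) (nbhs x)).
- apply: (cvg_comp _ _ (@cvg_fst _ _ (nbhs z) (nbhs x) _)); exact: cq.
- exact: (@cvg_snd _ _ (nbhs z) (nbhs x) _).
Qed.
Lemma pc2 (Z X : topologicalType) (x : X) : continuous (fun z : Z => (z, x)).
Proof.
move=> z; apply: (@cvg_pair _ _ _ (nbhs z) (nbhs z) (nbhs x)); [exact: cvg_id | exact: cvg_cst].
Qed.

Theorem proposition2p8 (R : realType) (d : nat)
  (phi : 'rV[R]_(d.+1) -> 'rV[R]_(d.+1))
  (L : set 'rV[R]_(d.+1))
  (Z : pseudoMetricType R) (zeta zetainv : Z -> Z)
  (q : Z -> 'rV[R]_(d.+1)) (j : 'rV[R]_(d.+1) -> Z)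
  (W : topologicalType)
  (h hinv : 'rV[R]_(d.+1) -> W * {ptws nat -> R} -> W * {ptws nat -> R}) :
  (* d odd, d >= 3; phi a minimal diffeomorphism of S^d *)
  odd d -> (3 <= d)%N ->
  sphere_diffeo phi -> minimal_on (sphere R d) phi ->
  (* L_infty: phi-invariant injectively immersed line in S^d *)
  L `<=` sphere R d -> injective_immersed_line L -> phi @` L = L ->
  (* Z compact metric; j identifies S^d \ L_infty with a dense subset of Z *)
  hausdorff_space Z -> compact [set: Z] ->
  {in sphere R d `\` L &, injective j} ->
  dense (j @` (sphere R d `\` L)) ->
  (* zeta minimal homeomorphism of Z extending phi on S^d \ L_infty *)
  homeo_on [set: Z] zeta zetainv -> minimal_on [set: Z] zeta ->
  (forall s, (sphere R d `\` L) s -> zeta (j s) = j (phi s)) ->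
  (* q : Z -> S^d almost one-to-one factor map, identity on S^d \ L_infty *)
  continuous q -> q @` [set: Z] = sphere R d ->
  (forall z, q (zeta z) = phi (q z)) ->
  (forall s, (sphere R d `\` L) s -> q (j s) = s) ->
  dense [set z : Z | forall z' : Z, q z' = q z -> z' = z] ->
  (* W: compact connected Hausdorff space (finite connected CW-complex) *)
  hausdorff_space W -> compact [set: W] -> connected [set: W] ->
  (* h : S^d -> Homeo(W x Q) continuous *)
  cont_homeo_family (sphere R d) ([set: W] `*` hilbert_cube R) h hinv ->
  (* phi~ minimal on S^d x W x Q *)
  minimal_on (sphere R d `*` ([set: W] `*` hilbert_cube R))
    (fun p => (phi p.1, h p.1 p.2)) ->
  (* conclusion: zeta~ minimal on Z x W x Q *)
  minimal_on ([set: Z] `*` ([set: W] `*` hilbert_cube R))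
    (fun p => (zeta p.1, h (q p.1) p.2)).
Proof.
move=> _ _ _ _ _ _ _ hZ cZ _ _ _ _ _ cq qim qz _ dG hW cW _ _ Hmin.
pose B := [set: W] `*` hilbert_cube R.
move=> C CA [D [clD CD]] C0 Cinv.
pose P := fun p : Z * (W * {ptws nat -> R}) => (q p.1, p.2).
have Pc : continuous P := @pc Z _ (W * {ptws nat -> R})%type q cq.
have cA : compact ([set: Z] `*` B).
  apply: compact_setX => //; apply: compact_setX => //; exact: hilbert_cube_compact.
have cC : compact C by rewrite CD; exact: compact_closedI.
have cPC : compact (P @` C) by apply: continuous_compact => //; exact: continuous_subspaceT.
have hT : hausdorff_space ('rV[R]_d.+1 * (W * {ptws nat -> R}))%type.
  apply: hausdorff_pair; first exact: norm_hausdorff.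
  apply: hausdorff_pair => //; apply: hausdorff_product => _; exact: norm_hausdorff.
have clPC : closed (P @` C) by exact: compact_closed.
have PCsub : P @` C `<=` sphere R d `*` B.
  move=> _ [c /CA [_ Bc] <-]; split => //=; rewrite -qim; by exists c.1.
have PCeq : P @` C = sphere R d `*` B.
  apply: Hmin => //.
  - exists (P @` C); split => //; apply/seteqP; split => [y Hy|y [_ Hy]] //; split => //; exact: PCsub.
  - case: C0 => c Cc; exists (P c); by exists c.
  - apply/seteqP; split.
    + move=> _ [_ [c Cc <-] <-]; exists (zeta c.1, h (q c.1) c.2).
        rewrite -Cinv; by exists c.
      by rewrite /P /= qz.
    + move=> _ [c Cc <-]; move: Cc; rewrite -{1}Cinv => -[c' Cc' <-].
      exists (P c'); first by exists c'.
      by rewrite /P /= qz.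
apply/seteqP; split => // -[z x] [_ Bx].
rewrite CD; split => //.
pose S := [set z' | D (z', x)].
have clS : closed S.
  apply: (@preimage_closed _ _ (fun z' => (z', x)) D) => // z' _.
  exact: (@pc2 Z (W * {ptws nat -> R})%type x).
have GS : [set z : Z | forall z' : Z, q z' = q z -> z' = z] `<=` S.
  move=> g Hg; have : (sphere R d `*` B) (q g, x).
    split => //=; rewrite -qim; by exists g.
  rewrite -PCeq => -[c Cc [e1 e2]].
  have := Hg _ e1 => e3; rewrite /S /=.
  have : C c by [].
  rewrite CD => -[_]; by case: c {Cc} e1 e2 e3 => c1 c2 /= _ -> ->.
apply: contrapT => nSz.
have [] := dG (~` S) _ _.
- by exists z.
- exact: closed_openC.
- move=> y [nSy Gy]; exact: nSy (GS _ Gy).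
Qed.
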